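(* (1) Soundness: if $\Phi;\Gamma\vdash_I t:\rho$ holds for a template type $\rho$, then $\Gamma\xi\vdash_J t:\rho\xi$ holds for every model $(J,\xi)$ of $\Phi$. (2) Completeness: if $\Gamma\vdash_J t:\rho$ holds for a context $\Gamma$ and a type $\rho$ (without second-order variables), then there exist a template type $\tau$ and a second-order substitution $\xi$ with $\tau\xi=\rho$ such that $\Phi;\Gamma\vdash_I t:\tau$ is derivable for some SOCP $\Phi$, and $(J,\xi)$ is a model of $\Phi$.
   Context: Simply typed terms over variables, function symbols $\mathcal F$, constructors $\mathcal C$: variables, symbols, applications $t\,u$, pairs $(t,u)$, $\mathsf{let}\ (x,y)=t\ \mathsf{in}\ u$. Second-order index terms $a::=i\mid\alpha\mid g(a_1,\dots,a_k)$ over index variables $i$, second-order variables $\alpha$, index symbols $g$ (including $0,\mathsf s,+$). An interpretation $J$ maps $k$-ary symbols to total weakly monotone functions $\mathbb N^k\to\mathbb N$ ($0,\mathsf s,+$ standard); $a\le_J b$ iff $[a]^\beta_J\le[b]^\beta_J$ for all assignments. An SOCP is a set of inequalities $a\le b$ and occurrence constraints $i\notin\alpha$; a second-order substitution $\xi$ maps second-order variables to index terms without second-order variables; $(J,\xi)$ is a model of $\Phi$ if $a\xi\le_J b\xi$ for all inequalities and $i\notin\mathrm{Var}(\xi(\alpha))$ for all occurrence constraints. Sized types: monotypes $\rho::=B^a\mid\rho_1\times\rho_2\mid\sigma\to\rho$; polytypes $\forall\vec i.\,\sigma\to\rho$; types $\sigma::=\rho\mid$ polytype; monotypes identified with $\forall\cdot.\rho$;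 template types may contain second-order variables. $\mathrm{FV}$ is the set of free index variables. $\forall\vec i.\tau\sqsupseteq\rho$ iff $\rho=\tau\{\vec i:=\vec a\}$. Subtyping $\sqsubseteq_J$: $B^a\sqsubseteq_J B^b$ if $a\le_J b$; componentwise on products; $\sigma_1\to\rho_1\sqsubseteq_J\sigma_2\to\rho_2$ if $\sigma_2\sqsubseteq_J\sigma_1$ and $\rho_1\sqsubseteq_J\rho_2$; $\forall\vec i.\rho_1\sqsubseteq_J\sigma_2$ if $\sigma_2\sqsupseteq\rho_2$, $\rho_1\sqsubseteq_J\rho_2$, $\vec i\cap\mathrm{FV}(\sigma_2)=\emptyset$. Every $s\in\mathcal F\cup\mathcal C$ has a closed declared sized type $s::\sigma$ (no second-order variables). Contexts $\Gamma$ map variables to (template) types; $\Gamma|_X$ restriction; $\Gamma\xi$ applies $\xi$ to all types. Syntax-directed typing $\Gamma\vdash_J t:\rho$: (Var) $\Gamma,x:\sigma\vdash x:\rho$ if $\sigma\sqsupseteq\rho$; (Fun) $\Gamma\vdash s:\rho$ if $s::\sigma$ and $\sigma\sqsupseteq\rho$; (Let) from $\Gamma\vdash t:\rho_1\times\rho_2$ and $\Gamma,x_1:\rho_1,x_2:\rho_2\vdash u:\rho$ infer $\Gamma\vdash\mathsf{let}\ (x_1,x_2)=t\ \mathsf{in}\ u:\rho$; (Pair) from $\Gamma\vdash t_i:\rho_i$ infer $\Gamma\vdash(t_1,t_2):\rho_1\times\rho_2$; (App) from $\Gamma\vdash t:(\forall\vec i.\tau_1)\to\rho$, $\Gamma\vdash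 u:\tau_2$, $\tau_2\sqsubseteq_J\tau_1$, $\vec i\cap\mathrm{FV}(\Gamma|_{\mathrm{FV}(u)})=\emptyset$ infer $\Gamma\vdash t\,u:\rho$. Subtyping inference $\Phi\vdash_I\sigma\sqsubseteq\tau$: $\{a\le b\}\vdash_I B^a\sqsubseteq B^b$; products: union of component constraints; arrows: from $\Phi_1\vdash_I\sigma_2\sqsubseteq\sigma_1$, $\Phi_2\vdash_I\rho_1\sqsubseteq\rho_2$ infer $\Phi_1\cup\Phi_2\vdash_I\sigma_1\to\rho_1\sqsubseteq\sigma_2\to\rho_2$; for fresh second-order $\vec\alpha$, from $\Phi\vdash_I\rho_1\sqsubseteq\rho_2\{\vec j:=\vec\alpha\}$ and $\vec i\cap\mathrm{FV}(\forall\vec j.\rho_2)=\emptyset$ infer $\Phi\cup\{\vec i\notin\rho_1\}\cup\{\vec i\notin\rho_2\}\vdash_I\forall\vec i.\rho_1\sqsubseteq\forall\vec j.\rho_2$, where $\vec i\notin\vec\rho$ is the set of occurrence constraints $i_k\notin\alpha$ for all $i_k\in\vec i$ and all second-order $\alpha$ occurring in $\vec\rho$ (for a context, in its types). Type inference $\Phi;\Gamma\vdash_I t:\rho$: (Var-I) $\emptyset;\Gamma,x:\forall\vec i.\rho\vdash_I x:\rho\{\vec i:=\vec\alpha\}$, $\vec\alpha$ fresh; (Fun-I) $\emptyset;\Gamma\vdash_I s:\rho\{\vec i:=\vec\alpha\}$ if $s\in\mathcal F\cup\mathcal C$, $s::\forall\vec i.\rho$, $\vec\alpha$ fresh; (Let-I)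 from $\Phi_1;\Gamma\vdash_I t:\rho_1\times\rho_2$ and $\Phi_2;\Gamma,x_1:\rho_1,x_2:\rho_2\vdash_I u:\rho$ infer $\Phi_1\cup\Phi_2;\Gamma\vdash_I\mathsf{let}\ (x_1,x_2)=t\ \mathsf{in}\ u:\rho$; (Pair-I) from $\Phi_i;\Gamma\vdash_I t_i:\rho_i$ infer $\Phi_1\cup\Phi_2;\Gamma\vdash_I(t_1,t_2):\rho_1\times\rho_2$; (App-I) from $\Phi_1;\Gamma\vdash_I t:(\forall\vec i.\tau_1)\to\rho$, $\Phi_2;\Gamma\vdash_I u:\tau_2$, $\Phi_3\vdash_I\tau_2\sqsubseteq\tau_1$ and $\vec i\cap\mathrm{FV}(\Gamma|_{\mathrm{FV}(u)})=\emptyset$ infer $\Phi_1\cup\Phi_2\cup\Phi_3\cup\{\vec i\notin\tau_1\}\cup\{\vec i\notin\Gamma|_{\mathrm{FV}(u)}\};\Gamma\vdash_I t\,u:\rho$. *)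

(* Defs.v *)
(* Binders of index variables (the "forall i1..in." of polytypes) are
   represented in locally-nameless style, so that alpha-equivalent types are
   syntactically equal; free index variables are named by nat. *)
From Stdlib Require Import List Arith Bool.
Import ListNotations.

Inductive idx : Type :=
| IVar   (i : nat)
| IBound (d k : nat)             (* bound: k-th variable of the d-th
                                    enclosing forall (0 = innermost)    *)
| ISO    (alpha : nat)
| IZero
| ISucc  (a : idx)
| IPlus  (a b : idx)
| IFun   (g : nat) (args : list idx).
  (* index symbol g applied to args; the arity of the symbol is the
     length of args (symbols of different arities are different symbols) *)

Definition interp := nat -> list nat -> nat.

Definition interpretation (J : interp) : Prop :=
  forall g l1 l2, Forall2 le l1 l2 -> J g l1 <= J g l2.

(* Bound and second-order variables never occur in the terms
   that are evaluated (evaluation is only used on index terms without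
   second-order variables); they are sent to 0 for totality. *)
Fixpoint eval (J : interp) (beta : nat -> nat) (a : idx) : nat :=
  match a with
  | IVar i => beta i
  | IBound _ _ => 0
  | ISO _ => 0
  | IZero => 0
  | ISucc a => S (eval J beta a)
  | IPlus a b => eval J beta a + eval J beta b
  | IFun g args => J g (map (eval J beta) args)
  end.

Definition idx_le (J : interp) (a b : idx) : Prop :=
  forall beta : nat -> nat, eval J beta a <= eval J beta b.

Fixpoint fv_idx (a : idx) : list nat :=
  match a with
  | IVar i => [i]
  | IBound _ _ | ISO _ | IZero => []
  | ISucc a => fv_idx a
  | IPlus a b => fv_idx a ++ fv_idx b
  | IFun _ args => flat_map fv_idx args
  end.

Fixpoint sov_idx (a : idx) : list nat :=
  match a with
  | ISO al => [al]
  | IVar _ | IBound _ _ | IZero => []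
  | ISucc a => sov_idx a
  | IPlus a b => sov_idx a ++ sov_idx b
  | IFun _ args => flat_map sov_idx args
  end.

(* "pure" index term: an index term in the paper's sense (no bound-variable
   placeholder) without second-order variables *)
Fixpoint pure_idx (a : idx) : Prop :=
  match a with
  | IVar _ | IZero => True
  | IBound _ _ | ISO _ => False
  | ISucc a => pure_idx a
  | IPlus a b => pure_idx a /\ pure_idx b
  | IFun _ args => fold_right (fun b P => pure_idx b /\ P) True args
  end.

(* an index term of the paper (possibly with second-order variables):
   contains no bound-variable placeholder *)
Fixpoint lc_idx (a : idx) : Prop :=
  match a with
  | IVar _ | IZero | ISO _ => True
  | IBound _ _ => False
  | ISucc a => lc_idx a
  | IPlus a b => lc_idx a /\ lc_idx b
  | IFun _ args => fold_right (fun b P => lc_idx b /\ P) True args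
  end.

Fixpoint open_idx (d : nat) (as_ : list idx) (a : idx) : idx :=
  match a with
  | IBound e k => if Nat.eqb e d then nth k as_ IZero else IBound e k
  | ISucc a => ISucc (open_idx d as_ a)
  | IPlus a b => IPlus (open_idx d as_ a) (open_idx d as_ b)
  | IFun g args => IFun g (map (open_idx d as_) args)
  | a => a
  end.

Fixpoint so_subst_idx (xi : nat -> idx) (a : idx) : idx :=
  match a with
  | ISO al => xi al
  | ISucc a => ISucc (so_subst_idx xi a)
  | IPlus a b => IPlus (so_subst_idx xi a) (so_subst_idx xi b)
  | IFun g args => IFun g (map (so_subst_idx xi) args)
  | a => a
  end.

(* validity of bound variables w.r.t. the binder sizes ds (innermost first) *)
Fixpoint wf_idx (ds : list nat) (a : idx) : Prop :=
  match a with
  | IBound e k => exists m, nth_error ds e = Some m /\ k < m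
  | IVar _ | IZero | ISO _ => True
  | ISucc a => wf_idx ds a
  | IPlus a b => wf_idx ds a /\ wf_idx ds b
  | IFun _ args => fold_right (fun b P => wf_idx ds b /\ P) True args
  end.

(* rho ::= B^a | rho1 x rho2 | sigma -> rho ;
   sigma ::= forall (n variables). rho   (n = 0 : a monotype) *)
Inductive mono : Type :=
| TBase (B : nat) (a : idx)
| TProd (r1 r2 : mono)
| TArr  (s : sty) (r : mono)
with sty : Type :=
| TAll (n : nat) (r : mono).

Fixpoint open_mono (d : nat) (as_ : list idx) (r : mono) : mono :=
  match r with
  | TBase B a => TBase B (open_idx d as_ a)
  | TProd r1 r2 => TProd (open_mono d as_ r1) (open_mono d as_ r2)
  | TArr s r => TArr (open_sty d as_ s) (open_mono d as_ r)
  end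
with open_sty (d : nat) (as_ : list idx) (s : sty) : sty :=
  match s with
  | TAll n r => TAll n (open_mono (S d) as_ r)
  end.

Definition open (r : mono) (as_ : list idx) : mono := open_mono 0 as_ r.

Fixpoint fv_mono (r : mono) : list nat :=
  match r with
  | TBase _ a => fv_idx a
  | TProd r1 r2 => fv_mono r1 ++ fv_mono r2
  | TArr s r => fv_sty s ++ fv_mono r
  end
with fv_sty (s : sty) : list nat :=
  match s with TAll _ r => fv_mono r end.

Fixpoint sov_mono (r : mono) : list nat :=
  match r with
  | TBase _ a => sov_idx a
  | TProd r1 r2 => sov_mono r1 ++ sov_mono r2
  | TArr s r => sov_sty s ++ sov_mono r
  end
with sov_sty (s : sty) : list nat :=
  match s with TAll _ r => sov_mono r end.

Fixpoint so_subst_mono (xi : nat -> idx) (r : mono) : mono :=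
  match r with
  | TBase B a => TBase B (so_subst_idx xi a)
  | TProd r1 r2 => TProd (so_subst_mono xi r1) (so_subst_mono xi r2)
  | TArr s r => TArr (so_subst_sty xi s) (so_subst_mono xi r)
  end
with so_subst_sty (xi : nat -> idx) (s : sty) : sty :=
  match s with TAll n r => TAll n (so_subst_mono xi r) end.

Fixpoint wf_mono (ds : list nat) (r : mono) : Prop :=
  match r with
  | TBase _ a => wf_idx ds a
  | TProd r1 r2 => wf_mono ds r1 /\ wf_mono ds r2
  | TArr s r => wf_sty ds s /\ wf_mono ds r
  end
with wf_sty (ds : list nat) (s : sty) : Prop :=
  match s with
  | TAll n r =>
      (0 < n -> match r with TArr _ _ => True | _ => False end)
      /\ wf_mono (n :: ds) r
  end.

Definition inst (s : sty) (r : mono) : Prop :=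
  match s with
  | TAll n body =>
      exists as_ : list idx, length as_ = n /\ Forall pure_idx as_ /\
                             r = open body as_
  end.

Definition fresh_names (n : nat) (is : list nat) (avoid : list nat) : Prop :=
  length is = n /\ NoDup is /\ forall i, In i is -> ~ In i avoid.

Definition ivars (is : list nat) : list idx := map IVar is.
Definition sovars (als : list nat) : list idx := map ISO als.

Inductive sub_mono (J : interp) : mono -> mono -> Prop :=
| SubBase : forall B a b, idx_le J a b -> sub_mono J (TBase B a) (TBase B b)
| SubProd : forall r1 r2 r1' r2',
    sub_mono J r1 r1' -> sub_mono J r2 r2' ->
    sub_mono J (TProd r1 r2) (TProd r1' r2')
| SubArr : forall s1 r1 s2 r2,
    sub_sty J s2 s1 -> sub_mono J r1 r2 ->
    sub_mono J (TArr s1 r1) (TArr s2 r2)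
with sub_sty (J : interp) : sty -> sty -> Prop :=
| SubAll : forall n r1 s2 r2 is,
    fresh_names n is (fv_sty s2 ++ fv_sty (TAll n r1)) ->
    inst s2 r2 ->
    sub_mono J (open r1 (ivars is)) r2 ->
    sub_sty J (TAll n r1) s2.

(* term variables and symbols of F ∪ C are named by nat *)
Inductive term : Type :=
| Var  (x : nat)
| Sym  (s : nat)
| App  (t u : term)
| Pair (t u : term)
| Let  (x1 x2 : nat) (t u : term).   (* let (x1,x2) = t in u *)

Fixpoint fv_term (t : term) : list nat :=
  match t with
  | Var x => [x]
  | Sym _ => []
  | App t u | Pair t u => fv_term t ++ fv_term u
  | Let x1 x2 t u =>
      fv_term t ++ filter (fun y => negb (Nat.eqb y x1) && negb (Nat.eqb y x2))
                          (fv_term u)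
  end.

(* contexts: the most recent binding (head of the list) shadows *)
Definition ctx := list (nat * sty).

Fixpoint lookup (G : ctx) (x : nat) : option sty :=
  match G with
  | [] => None
  | (y, s) :: G' => if Nat.eqb x y then Some s else lookup G' x
  end.

Definition fv_ctx_on (G : ctx) (X : list nat) : list nat :=
  flat_map (fun x => match lookup G x with Some s => fv_sty s | None => [] end) X.
Definition sov_ctx_on (G : ctx) (X : list nat) : list nat :=
  flat_map (fun x => match lookup G x with Some s => sov_sty s | None => [] end) X.

Definition sov_ctx (G : ctx) : list nat := flat_map (fun p => sov_sty (snd p)) G.
Definition so_subst_ctx (xi : nat -> idx) (G : ctx) : ctx :=
  map (fun p => (fst p, so_subst_sty xi (snd p))) G.
Definition wf_ctx (G : ctx) : Prop := Forall (fun p => wf_sty [] (snd p)) G.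

Definition decl_ok (decl : nat -> sty) : Prop :=
  forall s, wf_sty [] (decl s) /\ fv_sty (decl s) = [] /\ sov_sty (decl s) = [].

Inductive typing (decl : nat -> sty) (J : interp) : ctx -> term -> mono -> Prop :=
| TyVar : forall G x s r, lookup G x = Some s -> inst s r -> typing decl J G (Var x) r
| TyFun : forall G f r, inst (decl f) r -> typing decl J G (Sym f) r
| TyLet : forall G x1 x2 t u r1 r2 r,
    typing decl J G t (TProd r1 r2) ->
    typing decl J ((x2, TAll 0 r2) :: (x1, TAll 0 r1) :: G) u r ->
    typing decl J G (Let x1 x2 t u) r
| TyPair : forall G t u r1 r2,
    typing decl J G t r1 -> typing decl J G u r2 ->
    typing decl J G (Pair t u) (TProd r1 r2)
| TyApp : forall G t u n t1 r t2 is,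
    typing decl J G t (TArr (TAll n t1) r) ->
    typing decl J G u t2 ->
    fresh_names n is (fv_ctx_on G (fv_term u) ++ fv_sty (TAll n t1)) ->
    sub_mono J t2 (open t1 (ivars is)) ->
    typing decl J G (App t u) r.

Inductive constr : Type :=
| CLe (a b : idx)
| CNotIn (i alpha : nat).

Definition socp := list constr.

(* i⃗ ∉ (things whose second-order variables are als) *)
Definition occ (is als : list nat) : socp :=
  flat_map (fun i => map (CNotIn i) als) is.

Definition so_substitution (xi : nat -> idx) : Prop := forall al, pure_idx (xi al).

Definition satisfies (J : interp) (xi : nat -> idx) (c : constr) : Prop :=
  match c with
  | CLe a b => idx_le J (so_subst_idx xi a) (so_subst_idx xi b)
  | CNotIn i al => ~ In i (fv_idx (xi al))
  end.

Definition model (J : interp) (xi : nat -> idx) (Phi : socp) : Prop :=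
  interpretation J /\ so_substitution xi /\ Forall (satisfies J xi) Phi.

(* Inference.  Freshness of second-order variables is made precise by   *)
(* threading the list U of second-order variables already in use:       *)
(* judgements have the form  U ; Phi ; ... ; U'.                        *)

Definition fresh_so (n : nat) (als U : list nat) : Prop :=
  length als = n /\ NoDup als /\ forall a, In a als -> ~ In a U.

Inductive isub_mono : list nat -> mono -> mono -> socp -> list nat -> Prop :=
| ISubBase : forall U B a b, isub_mono U (TBase B a) (TBase B b) [CLe a b] U
| ISubProd : forall U U1 U2 r1 r2 r1' r2' P1 P2,
    isub_mono U r1 r1' P1 U1 -> isub_mono U1 r2 r2' P2 U2 ->
    isub_mono U (TProd r1 r2) (TProd r1' r2') (P1 ++ P2) U2
| ISubArr : forall U U1 U2 s1 r1 s2 r2 P1 P2,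
    isub_sty U s2 s1 P1 U1 -> isub_mono U1 r1 r2 P2 U2 ->
    isub_mono U (TArr s1 r1) (TArr s2 r2) (P1 ++ P2) U2
with isub_sty : list nat -> sty -> sty -> socp -> list nat -> Prop :=
| ISubAll : forall U U' n r1 m r2 is als P,
    fresh_names n is (fv_sty (TAll m r2) ++ fv_sty (TAll n r1)) ->
    fresh_so m als U ->
    isub_mono (als ++ U) (open r1 (ivars is)) (open r2 (sovars als)) P U' ->
    isub_sty U (TAll n r1) (TAll m r2)
             (P ++ occ is (sov_mono r1) ++ occ is (sov_mono r2)) U'.

Inductive infer (decl : nat -> sty) : list nat -> ctx -> term -> socp -> mono -> list nat -> Prop :=
| IVarI : forall U G x n r als,
    lookup G x = Some (TAll n r) -> fresh_so n als U ->
    infer decl U G (Var x) [] (open r (sovars als)) (als ++ U)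
| IFunI : forall U G f n r als,
    decl f = TAll n r -> fresh_so n als U ->
    infer decl U G (Sym f) [] (open r (sovars als)) (als ++ U)
| ILetI : forall U U1 U2 G x1 x2 t u P1 P2 r1 r2 r,
    infer decl U G t P1 (TProd r1 r2) U1 ->
    infer decl U1 ((x2, TAll 0 r2) :: (x1, TAll 0 r1) :: G) u P2 r U2 ->
    infer decl U G (Let x1 x2 t u) (P1 ++ P2) r U2
| IPairI : forall U U1 U2 G t u P1 P2 r1 r2,
    infer decl U G t P1 r1 U1 -> infer decl U1 G u P2 r2 U2 ->
    infer decl U G (Pair t u) (P1 ++ P2) (TProd r1 r2) U2
| IAppI : forall U U1 U2 U3 G t u n t1 r t2 is P1 P2 P3,
    infer decl U G t P1 (TArr (TAll n t1) r) U1 ->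
    infer decl U1 G u P2 t2 U2 ->
    fresh_names n is (fv_ctx_on G (fv_term u) ++ fv_sty (TAll n t1)) ->
    isub_mono U2 t2 (open t1 (ivars is)) P3 U3 ->
    infer decl U G (App t u)
          (P1 ++ P2 ++ P3 ++ occ is (sov_mono t1)
              ++ occ is (sov_ctx_on G (fv_term u))) r U3.

(* Main.v *)
Require Import Defs.
From Stdlib Require Import List Arith Lia Bool.
Import ListNotations.

Fixpoint idx_ind' (P : idx -> Prop)
  (HV : forall i, P (IVar i)) (HB : forall d k, P (IBound d k)) (HS : forall a, P (ISO a))
  (HZ : P IZero) (HSu : forall a, P a -> P (ISucc a))
  (HP : forall a b, P a -> P b -> P (IPlus a b))
  (HF : forall g l, Forall P l -> P (IFun g l)) (a : idx) : P a :=
  match a with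
  | IVar i => HV i | IBound d k => HB d k | ISO x => HS x | IZero => HZ
  | ISucc a => HSu a (idx_ind' P HV HB HS HZ HSu HP HF a)
  | IPlus a b => HP a b (idx_ind' P HV HB HS HZ HSu HP HF a) (idx_ind' P HV HB HS HZ HSu HP HF b)
  | IFun g l => HF g l ((fix go l : Forall P l := match l with
       | [] => Forall_nil P
       | x :: l' => Forall_cons x (idx_ind' P HV HB HS HZ HSu HP HF x) (go l') end) l)
  end.

Lemma fold_Forall (Q : idx -> Prop) l :
  fold_right (fun b P => Q b /\ P) True l <-> Forall Q l.
Proof.
  induction l; simpl; split; intros H; auto.
  - destruct H; constructor; tauto.
  - inversion H; subst; split; tauto.
Qed.

Definition pureS (xi : nat -> idx) := forall al, pure_idx (xi al).

Lemma open_pure : forall a d as_, pure_idx a -> open_idx d as_ a = a.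
Proof.
  induction a using idx_ind'; simpl; intros; try tauto; try reflexivity.
  - f_equal; auto.
  - f_equal; destruct H; auto.
  - f_equal. apply fold_Forall in H0.
    induction l; simpl; auto. inversion H; inversion H0; subst. f_equal; auto.
Qed.

Lemma subst_open_idx xi : pureS xi -> forall a d as_,
  so_subst_idx xi (open_idx d as_ a) =
  open_idx d (map (so_subst_idx xi) as_) (so_subst_idx xi a).
Proof.
  intros Hp. induction a using idx_ind'; intros; simpl; auto.
  - destruct (Nat.eqb d d0); simpl; auto.
    change IZero with (so_subst_idx xi IZero) at 2. now rewrite map_nth.
  - now rewrite open_pure.
  - f_equal; auto.
  - f_equal; auto.
  - f_equal. rewrite !map_map. apply map_ext_in. intros x Hx.
    rewrite Forall_forall in H. auto.
Qed.

Lemma subst_agree_idx : forall a xi1 xi2,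
  (forall al, In al (sov_idx a) -> xi1 al = xi2 al) ->
  so_subst_idx xi1 a = so_subst_idx xi2 a.
Proof.
  induction a using idx_ind'; simpl; intros; auto.
  - f_equal; auto.
  - f_equal; [apply IHa1 | apply IHa2]; intros; apply H; apply in_or_app; auto.
  - f_equal. apply map_ext_in. intros x Hx. rewrite Forall_forall in H.
    apply H; auto. intros; apply H0. apply in_flat_map; eauto.
Qed.

Lemma subst_id_idx : forall a, so_subst_idx ISO a = a.
Proof.
  induction a using idx_ind'; simpl; auto; try congruence.
  f_equal. induction l; simpl; auto. inversion H; subst; f_equal; auto.
Qed.

Lemma fv_subst_incl_idx : forall a xi i, In i (fv_idx a) -> In i (fv_idx (so_subst_idx xi a)).
Proof.
  induction a using idx_ind'; simpl; intros; auto; try tauto.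
  - apply in_app_or in H; apply in_or_app; firstorder.
  - apply in_flat_map in H0 as [x [Hx Hi]]. apply in_flat_map.
    exists (so_subst_idx xi x). split; [apply in_map; auto|].
    rewrite Forall_forall in H; auto.
Qed.

Lemma fv_subst_inv_idx : forall a xi i, In i (fv_idx (so_subst_idx xi a)) ->
  In i (fv_idx a) \/ exists al, In al (sov_idx a) /\ In i (fv_idx (xi al)).
Proof.
  induction a using idx_ind'; simpl; intros; auto.
  - right; exists a; auto.
  - apply in_app_or in H. destruct H as [H|H].
    + destruct (IHa1 _ _ H) as [?|[al [? ?]]]; [left|right]; [apply in_or_app; auto|].
      exists al; split; auto; apply in_or_app; auto.
    + destruct (IHa2 _ _ H) as [?|[al [? ?]]]; [left|right]; [apply in_or_app; auto|].
      exists al; split; auto; apply in_or_app; auto.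
  - apply in_flat_map in H0 as [y [Hy Hi]]. apply in_map_iff in Hy as [x [<- Hx]].
    rewrite Forall_forall in H. destruct (H x Hx xi i Hi) as [?|[al [? ?]]].
    + left; apply in_flat_map; eauto.
    + right; exists al; split; auto; apply in_flat_map; eauto.
Qed.

Lemma fv_xi_idx : forall a xi al i, In al (sov_idx a) -> In i (fv_idx (xi al)) ->
  In i (fv_idx (so_subst_idx xi a)).
Proof.
  induction a using idx_ind'; simpl; intros; try tauto.
  - destruct H; [subst; auto|tauto].
  - eauto.
  - apply in_app_or in H; apply in_or_app; firstorder.
  - apply in_flat_map in H0 as [x [Hx Ha]]. apply in_flat_map.
    exists (so_subst_idx xi x). split; [apply in_map; auto|].
    rewrite Forall_forall in H; eauto.
Qed.

Lemma sov_open_idx : forall a d as_ al, In al (sov_idx (open_idx d as_ a)) ->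
  In al (sov_idx a) \/ In al (flat_map sov_idx as_).
Proof.
  induction a using idx_ind'; simpl; intros; auto.
  - destruct (Nat.eqb d d0); simpl in *; [|tauto].
    destruct (nth_in_or_default k as_ IZero) as [Hin|Hd].
    + right; apply in_flat_map; eauto.
    + rewrite Hd in H; simpl in H; tauto.
  - eauto.
  - apply in_app_or in H. destruct H as [H|H].
    + destruct (IHa1 _ _ _ H); auto using in_or_app.
    + destruct (IHa2 _ _ _ H); auto using in_or_app.
  - apply in_flat_map in H0 as [y [Hy Hi]]. apply in_map_iff in Hy as [x [<- Hx]].
    rewrite Forall_forall in H. destruct (H x Hx _ _ _ Hi).
    + left; apply in_flat_map; eauto.
    + right; auto.
Qed.
Scheme mono_mut := Induction for mono Sort Prop
  with sty_mut := Induction for sty Sort Prop.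
Combined Scheme mono_sty_mut from mono_mut, sty_mut.

Lemma subst_open_ms xi : pureS xi ->
  (forall r d as_, so_subst_mono xi (open_mono d as_ r) =
     open_mono d (map (so_subst_idx xi) as_) (so_subst_mono xi r)) /\
  (forall s d as_, so_subst_sty xi (open_sty d as_ s) =
     open_sty d (map (so_subst_idx xi) as_) (so_subst_sty xi s)).
Proof.
  intros Hp. apply mono_sty_mut; simpl; intros; f_equal; auto.
  apply subst_open_idx; auto.
Qed.

Lemma subst_open xi r as_ : pureS xi ->
  so_subst_mono xi (open r as_) = open (so_subst_mono xi r) (map (so_subst_idx xi) as_).
Proof. intros Hp; apply (proj1 (subst_open_ms xi Hp)). Qed.

Lemma agree_ms :
  (forall r xi1 xi2, (forall al, In al (sov_mono r) -> xi1 al = xi2 al) ->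
     so_subst_mono xi1 r = so_subst_mono xi2 r) /\
  (forall s xi1 xi2, (forall al, In al (sov_sty s) -> xi1 al = xi2 al) ->
     so_subst_sty xi1 s = so_subst_sty xi2 s).
Proof.
  apply mono_sty_mut; simpl; intros; f_equal; auto using subst_agree_idx;
  match goal with H : _ |- _ => apply H end; intros; auto using in_or_app.
Qed.

Lemma id_ms : (forall r, so_subst_mono ISO r = r) /\ (forall s, so_subst_sty ISO s = s).
Proof. apply mono_sty_mut; simpl; intros; f_equal; auto using subst_id_idx. Qed.

Lemma nosov_mono xi r : sov_mono r = [] -> so_subst_mono xi r = r.
Proof.
  intros H. rewrite <- (proj1 id_ms r) at 2. apply agree_ms. rewrite H; simpl; tauto.
Qed.

Lemma fv_incl_ms :
  (forall r xi i, In i (fv_mono r) -> In i (fv_mono (so_subst_mono xi r))) /\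
  (forall s xi i, In i (fv_sty s) -> In i (fv_sty (so_subst_sty xi s))).
Proof.
  apply mono_sty_mut; simpl; intros; auto using fv_subst_incl_idx;
  apply in_app_or in H1; apply in_or_app; firstorder.
Qed.

Lemma fv_inv_ms :
  (forall r xi i, In i (fv_mono (so_subst_mono xi r)) ->
     In i (fv_mono r) \/ exists al, In al (sov_mono r) /\ In i (fv_idx (xi al))) /\
  (forall s xi i, In i (fv_sty (so_subst_sty xi s)) ->
     In i (fv_sty s) \/ exists al, In al (sov_sty s) /\ In i (fv_idx (xi al))).
Proof.
  apply mono_sty_mut; simpl; intros; try solve [auto using fv_subst_inv_idx].
  all: apply in_app_or in H1; destruct H1 as [H1|H1];
  [destruct (H _ _ H1) as [?|[al [? ?]]] | destruct (H0 _ _ H1) as [?|[al [? ?]]]];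
  solve [left; apply in_or_app; auto | right; exists al; split; auto; apply in_or_app; auto].
Qed.

Lemma fv_xi_ms :
  (forall r xi al i, In al (sov_mono r) -> In i (fv_idx (xi al)) ->
     In i (fv_mono (so_subst_mono xi r))) /\
  (forall s xi al i, In al (sov_sty s) -> In i (fv_idx (xi al)) ->
     In i (fv_sty (so_subst_sty xi s))).
Proof.
  apply mono_sty_mut; simpl; intros; eauto using fv_xi_idx;
  apply in_app_or in H1; apply in_or_app; firstorder eauto.
Qed.

Lemma sov_open_ms :
  (forall r d as_ al, In al (sov_mono (open_mono d as_ r)) ->
     In al (sov_mono r) \/ In al (flat_map sov_idx as_)) /\
  (forall s d as_ al, In al (sov_sty (open_sty d as_ s)) ->
     In al (sov_sty s) \/ In al (flat_map sov_idx as_)).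
Proof.
  apply mono_sty_mut; simpl; intros; try solve [eauto using sov_open_idx].
  all: apply in_app_or in H1; destruct H1 as [H1|H1];
  [destruct (H _ _ _ H1) | destruct (H0 _ _ _ H1)]; auto using in_or_app.
Qed.

Lemma sov_open r as_ al : In al (sov_mono (open r as_)) ->
  In al (sov_mono r) \/ In al (flat_map sov_idx as_).
Proof. apply (proj1 sov_open_ms). Qed.

Lemma map_subst_ivars xi is : map (so_subst_idx xi) (ivars is) = ivars is.
Proof. induction is; simpl; f_equal; auto. Qed.
Lemma map_subst_sovars xi als : map (so_subst_idx xi) (sovars als) = map xi als.
Proof. induction als; simpl; f_equal; auto. Qed.
Lemma sov_ivars is : flat_map sov_idx (ivars is) = [].
Proof. induction is; simpl; auto. Qed.
Lemma sov_sovars als : flat_map sov_idx (sovars als) = als.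
Proof. induction als; simpl; f_equal; auto. Qed.
Lemma lookup_subst xi G x :
  lookup (so_subst_ctx xi G) x = option_map (so_subst_sty xi) (lookup G x).
Proof. induction G as [|[y s] G IH]; simpl; auto. destruct (Nat.eqb x y); auto. Qed.

Lemma lookup_sov G x s : lookup G x = Some s -> incl (sov_sty s) (sov_ctx G).
Proof.
  induction G as [|[y s'] G IH]; simpl; intros H; [discriminate|].
  unfold sov_ctx; simpl. destruct (Nat.eqb x y).
  - inversion H; subst. intros a Ha; apply in_or_app; auto.
  - intros a Ha; apply in_or_app; right; apply IH; auto.
Qed.

Lemma agree_ctx G xi1 xi2 : (forall al, In al (sov_ctx G) -> xi1 al = xi2 al) ->
  so_subst_ctx xi1 G = so_subst_ctx xi2 G.
Proof.
  induction G as [|[y s] G IH]; simpl; intros H; auto.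
  unfold sov_ctx in H; simpl in H.
  f_equal; [f_equal; apply agree_ms | apply IH]; intros; apply H; apply in_or_app; auto.
Qed.

Lemma sov_ctx_on_incl G X al : In al (sov_ctx_on G X) -> In al (sov_ctx G).
Proof.
  unfold sov_ctx_on. intros H. apply in_flat_map in H as [x [_ Hx]].
  destruct (lookup G x) eqn:E; [|destruct Hx]. eapply lookup_sov; eauto.
Qed.

Lemma fv_ctx_on_incl G X xi i : In i (fv_ctx_on G X) -> In i (fv_ctx_on (so_subst_ctx xi G) X).
Proof.
  unfold fv_ctx_on. intros H. apply in_flat_map in H as [x [Hx Hi]].
  apply in_flat_map. exists x; split; auto. rewrite lookup_subst.
  destruct (lookup G x); simpl; [|destruct Hi]. apply fv_incl_ms; auto.
Qed.

Lemma fv_ctx_on_inv G X xi i : In i (fv_ctx_on (so_subst_ctx xi G) X) ->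
  In i (fv_ctx_on G X) \/ exists al, In al (sov_ctx_on G X) /\ In i (fv_idx (xi al)).
Proof.
  unfold fv_ctx_on, sov_ctx_on. intros H. apply in_flat_map in H as [x [Hx Hi]].
  rewrite lookup_subst in Hi. destruct (lookup G x) eqn:E; simpl in Hi; [|destruct Hi].
  destruct (proj2 fv_inv_ms _ _ _ Hi) as [?|[al [? ?]]].
  - left; apply in_flat_map; exists x; rewrite E; auto.
  - right; exists al; split; auto; apply in_flat_map; exists x; rewrite E; auto.
Qed.

Lemma fv_ctx_xi G X xi al i : In al (sov_ctx_on G X) -> In i (fv_idx (xi al)) ->
  In i (fv_ctx_on (so_subst_ctx xi G) X).
Proof.
  unfold fv_ctx_on, sov_ctx_on. intros H Hi. apply in_flat_map in H as [x [Hx Ha]].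
  apply in_flat_map; exists x; split; auto. rewrite lookup_subst.
  destruct (lookup G x); simpl; [|destruct Ha]. eapply fv_xi_ms; eauto.
Qed.

Definition sov_c (c : constr) : list nat :=
  match c with CLe a b => sov_idx a ++ sov_idx b | CNotIn _ al => [al] end.

Lemma sat_agree J xi1 xi2 c : (forall al, In al (sov_c c) -> xi1 al = xi2 al) ->
  satisfies J xi1 c -> satisfies J xi2 c.
Proof.
  destruct c; simpl; intros H Hs.
  - rewrite <- (subst_agree_idx a xi1 xi2), <- (subst_agree_idx b xi1 xi2); auto;
      intros; apply H; apply in_or_app; auto.
  - rewrite <- H; auto.
Qed.

Lemma in_occ is als c : In c (occ is als) ->
  exists i al, In i is /\ In al als /\ c = CNotIn i al.
Proof.
  unfold occ; intros H. apply in_flat_map in H as [i [Hi Hc]].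
  apply in_map_iff in Hc as [al [<- Hal]]. eauto.
Qed.

Lemma occ_sat J xi is als :
  (forall i al, In i is -> In al als -> ~ In i (fv_idx (xi al))) ->
  Forall (satisfies J xi) (occ is als).
Proof.
  intros H. apply Forall_forall; intros c Hc.
  destruct (in_occ _ _ _ Hc) as [i [al [? [? ->]]]]. simpl; auto.
Qed.

Lemma occ_sat_inv J xi is als i al : Forall (satisfies J xi) (occ is als) ->
  In i is -> In al als -> ~ In i (fv_idx (xi al)).
Proof.
  intros H Hi Ha. rewrite Forall_forall in H.
  apply (H (CNotIn i al)). unfold occ; apply in_flat_map; exists i; split; auto.
  apply in_map; auto.
Qed.

Lemma occ_sov is als (V : list nat) : incl als V ->
  Forall (fun c => incl (sov_c c) V) (occ is als).
Proof.
  intros H. apply Forall_forall; intros c Hc.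
  destruct (in_occ _ _ _ Hc) as [i [al [? [? ->]]]]. simpl.
  intros x [<-|[]]; auto.
Qed.

Lemma fresh_exists n (avoid : list nat) :
  exists l, length l = n /\ NoDup l /\ forall i, In i l -> ~ In i avoid.
Proof.
  exists (seq (S (list_max avoid)) n). split; [apply length_seq|]. split; [apply seq_NoDup|].
  intros i Hi Ha. apply in_seq in Hi.
  assert (i <= list_max avoid) by (apply list_max_le in Ha || idtac;
    pose proof (proj1 (list_max_le avoid (list_max avoid)) (le_n _)) as Hf;
    rewrite Forall_forall in Hf; apply Hf; auto).
  lia.
Qed.

Fixpoint ext (xi : nat -> idx) (als : list nat) (as_ : list idx) (al : nat) : idx :=
  match als, as_ with
  | a :: als', b :: as' => if Nat.eqb al a then b else ext xi als' as' al
  | _, _ => xi al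
  end.

Lemma ext_out xi als as_ al : ~ In al als -> ext xi als as_ al = xi al.
Proof.
  revert as_; induction als as [|a als IH]; intros [|b as_]; simpl; intros H; auto.
  destruct (Nat.eqb_spec al a); [exfalso; auto|]. apply IH; auto.
Qed.

Lemma ext_map xi als as_ : NoDup als -> length als = length as_ ->
  map (ext xi als as_) als = as_.
Proof.
  revert as_; induction als as [|a als IH]; intros [|b as_]; simpl; intros Hn Hl;
    try discriminate; auto.
  inversion Hn; subst. rewrite Nat.eqb_refl. f_equal.
  transitivity (map (ext xi als as_) als); [|apply IH; auto]. apply map_ext_in. intros x Hx.
  destruct (Nat.eqb_spec x a); subst; [contradiction|auto].
Qed.

Lemma ext_pure xi als as_ : pureS xi -> Forall pure_idx as_ -> pureS (ext xi als as_).
Proof.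
  intros Hp Hf al. revert as_ Hf; induction als as [|a als IH]; intros [|b as_] Hf; simpl; auto.
  inversion Hf; subst. destruct (Nat.eqb al a); auto.
Qed.

Definition ext_ok J (xi0 : nat -> idx) (U : list nat) xi (U' : list nat) (P : socp) :=
  Forall (satisfies J xi) P /\ pureS xi /\ (forall al, In al U -> xi al = xi0 al) /\
  incl U U' /\ Forall (fun c => incl (sov_c c) U') P.

Lemma ext_ok_comp J xi0 U xi1 U1 P1 xi2 U2 P2 :
  ext_ok J xi0 U xi1 U1 P1 -> ext_ok J xi1 U1 xi2 U2 P2 ->
  ext_ok J xi0 U xi2 U2 (P1 ++ P2).
Proof.
  intros (H1 & H2 & H3 & H4 & H5) (K1 & K2 & K3 & K4 & K5).
  repeat split; auto.
  - apply Forall_app; split; auto. rewrite Forall_forall in *. intros c Hc.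
    apply (sat_agree J xi1); auto. intros al Hal. symmetry; apply K3. apply (H5 c Hc); auto.
  - intros al Hal. rewrite K3; auto.
  - eapply incl_tran; eauto.
  - apply Forall_app; split; auto. rewrite Forall_forall in *. intros c Hc.
    eapply incl_tran; eauto.
Qed.

Lemma ext_ok_app J xi0 U xi U' P Q : ext_ok J xi0 U xi U' P ->
  Forall (satisfies J xi) Q -> Forall (fun c => incl (sov_c c) U') Q ->
  ext_ok J xi0 U xi U' (P ++ Q).
Proof.
  intros (H1 & H2 & H3 & H4 & H5) K1 K2. repeat split; auto; apply Forall_app; auto.
Qed.

Lemma ext_ok_refl J xi0 U : pureS xi0 -> ext_ok J xi0 U xi0 U [].
Proof. intros; repeat split; auto. apply incl_refl. Qed.
Scheme isub_mut := Induction for isub_mono Sort Prop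
  with isub_sty_mut := Induction for isub_sty Sort Prop.
Combined Scheme isub_ms_mut from isub_mut, isub_sty_mut.

Lemma inst_helper xi n r als : pureS xi -> length als = n ->
  inst (TAll n (so_subst_mono xi r)) (so_subst_mono xi (open r (sovars als))).
Proof.
  intros Hp Hl. simpl. exists (map xi als). split; [rewrite length_map; auto|]. split.
  - apply Forall_forall; intros x Hx; apply in_map_iff in Hx as [al [<- _]]; apply Hp.
  - rewrite subst_open, map_subst_sovars; auto.
Qed.

Lemma isub_sound J xi : pureS xi ->
  (forall U r1 r2 P U', isub_mono U r1 r2 P U' -> Forall (satisfies J xi) P ->
     sub_mono J (so_subst_mono xi r1) (so_subst_mono xi r2)) /\
  (forall U s1 s2 P U', isub_sty U s1 s2 P U' -> Forall (satisfies J xi) P ->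
     sub_sty J (so_subst_sty xi s1) (so_subst_sty xi s2)).
Proof.
  intros Hp. apply isub_ms_mut; simpl; intros.
  - constructor. inversion H; subst; auto.
  - apply Forall_app in H1 as [? ?]. constructor; auto.
  - apply Forall_app in H1 as [? ?]. constructor; auto.
  - rename H into Hsat'. apply Forall_app in H0 as [HP Hocc]; apply Forall_app in Hocc as [Ho1 Ho2].
    apply SubAll with (is := is) (r2 := so_subst_mono xi (open r2 (sovars als))).
    + destruct f as (Hl & Hnd & Hav). split; [|split]; auto. intros i0 Hi Hin. simpl in Hin.
      apply in_app_or in Hin as [Hin|Hin]; destruct (proj1 fv_inv_ms _ _ _ Hin) as [?|[al [? ?]]].
      * apply (Hav i0 Hi); simpl; apply in_or_app; auto.
      * eapply (occ_sat_inv J xi is (sov_mono r2)); eauto.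
      * apply (Hav i0 Hi); simpl; apply in_or_app; auto.
      * eapply (occ_sat_inv J xi is (sov_mono r1)); eauto.
    + apply inst_helper; auto. apply f0.
    + rewrite <- (map_subst_ivars xi is), <- subst_open; auto.
Qed.

Lemma infer_sound decl : decl_ok decl -> forall U G t P r U',
  infer decl U G t P r U' -> forall J xi, pureS xi -> Forall (satisfies J xi) P ->
  typing decl J (so_subst_ctx xi G) t (so_subst_mono xi r).
Proof.
  intros Hd. induction 1; intros J xi Hp Hs.
  - apply TyVar with (s := so_subst_sty xi (TAll n r)).
    + rewrite lookup_subst, H; auto.
    + apply inst_helper; auto. apply H0.
  - apply TyFun. rewrite H. destruct (Hd f) as (_ & _ & Hsov). rewrite H in Hsov.
    simpl in Hsov. rewrite <- (nosov_mono xi r) at 1; auto.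
    apply inst_helper; auto. apply H0.
  - apply Forall_app in Hs as [? ?].
    apply TyLet with (so_subst_mono xi r1) (so_subst_mono xi r2).
    + apply (IHinfer1 J xi); auto.
    + apply (IHinfer2 J xi); auto.
  - apply Forall_app in Hs as [? ?]. simpl. constructor; auto.
  - apply Forall_app in Hs as [K1 Hs]. apply Forall_app in Hs as [K2 Hs].
    apply Forall_app in Hs as [K3 Hs]. apply Forall_app in Hs as [K4 K5].
    apply TyApp with n (so_subst_mono xi t1) (so_subst_mono xi t2) is.
    + apply (IHinfer1 J xi); auto.
    + apply (IHinfer2 J xi); auto.
    + destruct H1 as (Hl & Hnd & Hav). split; [|split]; auto. intros i Hi Hin.
      apply in_app_or in Hin as [Hin|Hin].
      * destruct (fv_ctx_on_inv _ _ _ _ Hin) as [?|[al [? ?]]].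
        -- apply (Hav i Hi); apply in_or_app; auto.
        -- eapply (occ_sat_inv J xi is (sov_ctx_on G (fv_term u))); eauto.
      * simpl in Hin. destruct (proj1 fv_inv_ms _ _ _ Hin) as [?|[al [? ?]]].
        -- apply (Hav i Hi); apply in_or_app; auto.
        -- eapply (occ_sat_inv J xi is (sov_mono t1)); eauto.
    + rewrite <- (map_subst_ivars xi is), <- subst_open; auto.
      eapply isub_sound; eauto.
Qed.
Scheme sub_mut := Induction for sub_mono Sort Prop
  with sub_sty_mut := Induction for sub_sty Sort Prop.
Combined Scheme sub_ms_mut from sub_mut, sub_sty_mut.

Lemma ext_ok_weaken J xi0 xi1 U V xi U' P : ext_ok J xi1 V xi U' P -> incl U V ->
  (forall al, In al U -> xi1 al = xi0 al) -> ext_ok J xi0 U xi U' P.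
Proof.
  intros (H1 & H2 & H3 & H4 & H5) HI HA. repeat split; auto.
  - intros al Hal. rewrite H3; auto.
  - eapply incl_tran; eauto.
Qed.

Lemma agree_U_mono J xi0 U xi U' P r : ext_ok J xi0 U xi U' P -> incl (sov_mono r) U ->
  so_subst_mono xi r = so_subst_mono xi0 r.
Proof. intros (_ & _ & H & _) HI. apply agree_ms. auto. Qed.
Lemma agree_U_sty J xi0 U xi U' P r : ext_ok J xi0 U xi U' P -> incl (sov_sty r) U ->
  so_subst_sty xi r = so_subst_sty xi0 r.
Proof. intros (_ & _ & H & _) HI. apply agree_ms. auto. Qed.
Lemma agree_U_ctx J xi0 U xi U' P G : ext_ok J xi0 U xi U' P -> incl (sov_ctx G) U ->
  so_subst_ctx xi G = so_subst_ctx xi0 G.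
Proof. intros (_ & _ & H & _) HI. apply agree_ctx. auto. Qed.

Lemma ext_ok_incl J xi0 U xi U' P : ext_ok J xi0 U xi U' P -> incl U U'.
Proof. intros (_ & _ & _ & H & _); auto. Qed.
Lemma ext_ok_pure J xi0 U xi U' P : ext_ok J xi0 U xi U' P -> pureS xi.
Proof. intros (_ & H & _); auto. Qed.

Lemma isub_complete J :
  (forall r1 r2, sub_mono J r1 r2 -> forall t1 t2 xi0 U, pureS xi0 ->
     r1 = so_subst_mono xi0 t1 -> r2 = so_subst_mono xi0 t2 ->
     incl (sov_mono t1) U -> incl (sov_mono t2) U ->
     exists P xi U', isub_mono U t1 t2 P U' /\ ext_ok J xi0 U xi U' P) /\
  (forall s1 s2, sub_sty J s1 s2 -> forall t1 t2 xi0 U, pureS xi0 ->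
     s1 = so_subst_sty xi0 t1 -> s2 = so_subst_sty xi0 t2 ->
     incl (sov_sty t1) U -> incl (sov_sty t2) U ->
     exists P xi U', isub_sty U t1 t2 P U' /\ ext_ok J xi0 U xi U' P).
Proof.
  apply sub_ms_mut.
  - intros B a b Hle t1 t2 xi0 U Hp E1 E2 I1 I2.
    destruct t1; try discriminate; destruct t2; try discriminate.
    simpl in E1, E2; injection E1; injection E2; intros; subst.
    exists [CLe a0 a1], xi0, U. split; [constructor|].
    split; [constructor; simpl; auto|]. split; [auto|]. split; [auto|]. split; [apply incl_refl|].
    constructor; auto. simpl in *. apply incl_app; auto.
  - intros r1 r2 r1' r2' H1 IH1 H2 IH2 t1 t2 xi0 U Hp E1 E2 I1 I2.
    destruct t1; try discriminate; destruct t2; try discriminate.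
    simpl in E1, E2, I1, I2; injection E1; injection E2; intros; subst.
    apply incl_app_inv in I1 as [I1a I1b]; apply incl_app_inv in I2 as [I2a I2b].
    destruct (IH1 t1_1 t2_1 xi0 U Hp eq_refl eq_refl I1a I2a) as (P1 & xi1 & U1 & Hi1 & Ho1).
    destruct (IH2 t1_2 t2_2 xi1 U1 (ext_ok_pure _ _ _ _ _ _ Ho1)) as (P2 & xi2 & U2 & Hi2 & Ho2).
    + symmetry; eapply agree_U_mono; eauto.
    + symmetry; eapply agree_U_mono; eauto.
    + eapply incl_tran; [|eapply ext_ok_incl]; eauto.
    + eapply incl_tran; [|eapply ext_ok_incl]; eauto.
    + exists (P1 ++ P2), xi2, U2. split; [econstructor; eauto|]. eapply ext_ok_comp; eauto.
  - intros s1 r1 s2 r2 H1 IH1 H2 IH2 t1 t2 xi0 U Hp E1 E2 I1 I2.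
    destruct t1 as [| |st1 rt1]; try discriminate; destruct t2 as [| |st2 rt2]; try discriminate.
    simpl in E1, E2, I1, I2; injection E1; injection E2; intros; subst.
    apply incl_app_inv in I1 as [I1a I1b]; apply incl_app_inv in I2 as [I2a I2b].
    destruct (IH1 st2 st1 xi0 U Hp eq_refl eq_refl I2a I1a) as (P1 & xi1 & U1 & Hi1 & Ho1).
    destruct (IH2 rt1 rt2 xi1 U1 (ext_ok_pure _ _ _ _ _ _ Ho1)) as (P2 & xi2 & U2 & Hi2 & Ho2).
    + symmetry; eapply agree_U_mono; eauto.
    + symmetry; eapply agree_U_mono; eauto.
    + eapply incl_tran; [|eapply ext_ok_incl]; eauto.
    + eapply incl_tran; [|eapply ext_ok_incl]; eauto.
    + exists (P1 ++ P2), xi2, U2. split; [econstructor; eauto|]. eapply ext_ok_comp; eauto.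
  - intros n r1 s2 r2 is Hfr Hinst Hsub IH t1 t2 xi0 U Hp E1 E2 I1 I2.
    destruct t1 as [n' rt1]; destruct t2 as [m rt2].
    simpl in E1, E2, I1, I2; injection E1; intros; subst.
    destruct Hinst as (as_ & Hl & Hpa & Er2).
    destruct (fresh_exists m U) as (als & Hla & Hnd & Hav).
    set (xi1 := ext xi0 als as_).
    assert (A1 : forall al, In al U -> xi1 al = xi0 al).
    { intros al Hal; apply ext_out; intros Hc; apply (Hav al Hc Hal). }
    assert (Hp1 : pureS xi1) by (apply ext_pure; auto).
    assert (R1 : so_subst_mono xi1 rt1 = so_subst_mono xi0 rt1) by (apply agree_ms; auto).
    assert (R2 : so_subst_mono xi1 rt2 = so_subst_mono xi0 rt2) by (apply agree_ms; auto).
    destruct (IH (open rt1 (ivars is)) (open rt2 (sovars als)) xi1 (als ++ U) Hp1)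
      as (P & xi2 & U' & Hi & Ho).
    + rewrite subst_open, map_subst_ivars, R1; auto.
    + rewrite subst_open, map_subst_sovars, R2; auto. unfold xi1. rewrite ext_map; auto.
      congruence.
    + intros al Hal. apply sov_open in Hal. rewrite sov_ivars in Hal.
      apply in_or_app; right. destruct Hal as [?|[]]; auto.
    + intros al Hal. apply sov_open in Hal. rewrite sov_sovars in Hal.
      apply in_or_app. destruct Hal; auto.
    + exists (P ++ occ is (sov_mono rt1) ++ occ is (sov_mono rt2)), xi2, U'. split.
      * apply ISubAll with (als := als); auto.
        -- destruct Hfr as (Hl' & Hnd' & Hav'). split; [|split]; auto.
           intros i0 Hi0 Hin. apply (Hav' i0 Hi0). simpl in *.
           apply in_app_or in Hin as [Hin|Hin]; apply in_or_app;
             [left|right]; apply fv_incl_ms; auto.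
        -- split; [|split]; auto.
      * assert (Ho' : ext_ok J xi0 U xi2 U' P).
        { eapply ext_ok_weaken; eauto. intros al Hal; apply in_or_app; auto. }
        assert (A2 : forall al, In al U -> xi2 al = xi0 al) by apply Ho'.
        assert (IU : incl U U') by apply Ho'.
        apply ext_ok_app; auto.
        -- destruct Hfr as (_ & _ & Hav').
           apply Forall_app; split; apply occ_sat; intros i0 al Hi0 Hal Hin;
           apply (Hav' i0 Hi0); simpl; rewrite A2 in Hin; auto; apply in_or_app.
           ++ right; eapply (proj1 fv_xi_ms); eauto.
           ++ left; eapply (proj1 fv_xi_ms); eauto.
        -- apply Forall_app; split; apply occ_sov; eapply incl_tran; eauto.
Qed.
Lemma var_helper J xi0 U rt n as_ : pureS xi0 -> incl (sov_mono rt) U ->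
  length as_ = n -> Forall pure_idx as_ ->
  exists als xi, fresh_so n als U /\
    so_subst_mono xi (open rt (sovars als)) = open (so_subst_mono xi0 rt) as_ /\
    incl (sov_mono (open rt (sovars als))) (als ++ U) /\
    ext_ok J xi0 U xi (als ++ U) [].
Proof.
  intros Hp HI Hl Hpa.
  destruct (fresh_exists n U) as (als & Hla & Hnd & Hav).
  assert (A1 : forall al, In al U -> ext xi0 als as_ al = xi0 al).
  { intros al Hal; apply ext_out; intros Hc; apply (Hav al Hc Hal). }
  exists als, (ext xi0 als as_). split; [split; auto|]. split; [|split].
  - rewrite subst_open, map_subst_sovars by (apply ext_pure; auto).
    rewrite ext_map by (auto; congruence). f_equal. apply agree_ms; auto.
  - intros al Hal. apply sov_open in Hal. rewrite sov_sovars in Hal.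
    apply in_or_app. destruct Hal; auto.
  - split; [constructor|]. split; [apply ext_pure; auto|]. split; auto.
    split; [intros a Ha; apply in_or_app; auto | constructor].
Qed.

Lemma infer_complete decl J : decl_ok decl -> forall G' t rho,
  typing decl J G' t rho -> forall G xi0 U, pureS xi0 -> G' = so_subst_ctx xi0 G ->
  incl (sov_ctx G) U ->
  exists tau xi P U', infer decl U G t P tau U' /\ so_subst_mono xi tau = rho /\
    incl (sov_mono tau) U' /\ ext_ok J xi0 U xi U' P.
Proof.
  intros Hd. induction 1; intros G0 xi0 U Hp EG HI; subst.
  - rewrite lookup_subst in H. destruct (lookup G0 x) as [[n rt]|] eqn:E; inversion H; subst.
    simpl in H0. destruct H0 as (as_ & Hl & Hpa & ->).
    destruct (var_helper J xi0 U rt n as_ Hp) as (als & xi & Hf & Ht & Hs & Ho); auto.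
    { eapply incl_tran; [|exact HI]. apply (lookup_sov _ _ _ E). }
    exists (open rt (sovars als)), xi, [], (als ++ U). split; [econstructor; eauto|]. auto.
  - destruct (decl f) as [n r0] eqn:E. destruct (Hd f) as (_ & _ & Hsov).
    rewrite E in Hsov. simpl in Hsov. destruct H as (as_ & Hl & Hpa & ->).
    destruct (var_helper J xi0 U r0 n as_ Hp) as (als & xi & Hf & Ht & Hs & Ho); auto.
    { rewrite Hsov; intros a []. }
    exists (open r0 (sovars als)), xi, [], (als ++ U). split; [econstructor; eauto|].
    rewrite (nosov_mono xi0 r0 Hsov) in Ht; auto.
  - destruct (IHtyping1 G0 xi0 U Hp eq_refl HI) as (tau1 & xi1 & P1 & U1 & Hi1 & E1 & S1 & Ho1).
    destruct tau1 as [| rt1 rt2 |]; try discriminate. simpl in E1, S1. injection E1; intros; subst.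
    apply incl_app_inv in S1 as [S1a S1b].
    destruct (IHtyping2 ((x2, TAll 0 rt2) :: (x1, TAll 0 rt1) :: G0) xi1 U1
       (ext_ok_pure _ _ _ _ _ _ Ho1)) as (tau2 & xi2 & P2 & U2 & Hi2 & E2 & S2 & Ho2).
    + simpl. f_equal. f_equal. symmetry; eapply agree_U_ctx; eauto.
    + unfold sov_ctx; simpl. apply incl_app; auto. apply incl_app; auto.
      eapply incl_tran; [exact HI|]. eapply ext_ok_incl; eauto.
    + exists tau2, xi2, (P1 ++ P2), U2. split; [econstructor; eauto|]. split; auto.
      split; auto. eapply ext_ok_comp; eauto.
  - destruct (IHtyping1 G0 xi0 U Hp eq_refl HI) as (tau1 & xi1 & P1 & U1 & Hi1 & E1 & S1 & Ho1).
    destruct (IHtyping2 G0 xi1 U1 (ext_ok_pure _ _ _ _ _ _ Ho1))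
      as (tau2 & xi2 & P2 & U2 & Hi2 & E2 & S2 & Ho2).
    + symmetry; eapply agree_U_ctx; eauto.
    + eapply incl_tran; [exact HI|]. eapply ext_ok_incl; eauto.
    + exists (TProd tau1 tau2), xi2, (P1 ++ P2), U2. split; [econstructor; eauto|].
      split; [|split].
      * simpl. f_equal; auto. rewrite <- E1. eapply agree_U_mono; eauto.
      * simpl. apply incl_app; auto. eapply incl_tran; [exact S1|]. eapply ext_ok_incl; eauto.
      * eapply ext_ok_comp; eauto.
  - rename H1 into Hfr, H2 into Hsub.
    destruct (IHtyping1 G0 xi0 U Hp eq_refl HI) as (tau1 & xi1 & P1 & U1 & Hi1 & E1 & S1 & Ho1).
    destruct tau1 as [| | [n' t1'] r']; try discriminate. simpl in E1, S1.
    injection E1; intros; subst. apply incl_app_inv in S1 as [S1a S1b].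
    destruct (IHtyping2 G0 xi1 U1 (ext_ok_pure _ _ _ _ _ _ Ho1))
      as (tau2 & xi2 & P2 & U2 & Hi2 & E2 & S2 & Ho2).
    + symmetry; eapply agree_U_ctx; eauto.
    + eapply incl_tran; [exact HI|]. eapply ext_ok_incl; eauto.
    + assert (I12 : incl U1 U2) by (eapply ext_ok_incl; eauto).
      destruct (proj1 (isub_complete J) _ _ Hsub tau2 (open t1' (ivars is)) xi2 U2
        (ext_ok_pure _ _ _ _ _ _ Ho2)) as (P3 & xi3 & U3 & Hi3 & Ho3); auto.
      * rewrite subst_open, map_subst_ivars by (eapply ext_ok_pure; eauto).
        f_equal. symmetry; eapply agree_U_mono; eauto.
      * intros al Hal. apply sov_open in Hal. rewrite sov_ivars in Hal.
        destruct Hal as [?|[]]; auto.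
      * assert (Ho23 := ext_ok_comp _ _ _ _ _ _ _ _ _ Ho2 Ho3).
        assert (Ho := ext_ok_comp _ _ _ _ _ _ _ _ _ Ho1 Ho23).
        assert (I23 : incl U2 U3) by (eapply ext_ok_incl; eauto).
        assert (I0 : incl U U1) by (eapply ext_ok_incl; eauto).
        exists r', xi3, (P1 ++ P2 ++ P3 ++ occ is (sov_mono t1') ++ occ is (sov_ctx_on G0 (fv_term u))), U3.
        split; [|split; [|split]].
        -- eapply IAppI; eauto.
           destruct Hfr as (Hl & Hnd & Hav). split; [|split]; auto.
           intros i Hi Hin. apply (Hav i Hi). apply in_app_or in Hin as [Hin|Hin];
             apply in_or_app; [left; apply fv_ctx_on_incl; auto|right].
           simpl in *. apply fv_incl_ms; auto.
        -- eapply agree_U_mono; eauto.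
        -- do 2 (eapply incl_tran; eauto).
        -- match goal with |- ext_ok _ _ _ _ _ (?A ++ ?B ++ ?C ++ ?D ++ ?E) =>
             replace (A ++ B ++ C ++ D ++ E) with ((A ++ B ++ C) ++ (D ++ E))
               by (rewrite !app_assoc; reflexivity) end.
           apply ext_ok_app; auto.
           ++ destruct Hfr as (_ & _ & Hav). apply Forall_app; split; apply occ_sat;
                intros i al Hi Hal Hin; apply (Hav i Hi); apply in_or_app.
              ** right. simpl. erewrite <- (agree_U_mono _ _ _ _ _ _ t1' Ho23); eauto.
                 eapply (proj1 fv_xi_ms); eauto.
              ** left. assert (HalU : In al U) by (apply HI; eapply sov_ctx_on_incl; eauto).
                 destruct Ho as (_ & _ & A & _). rewrite A in Hin by auto.
                 eapply fv_ctx_xi; eauto.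
           ++ apply Forall_app; split; apply occ_sov.
              ** do 2 (eapply incl_tran; eauto).
              ** intros al Hal. apply I23, I12, I0, HI. eapply sov_ctx_on_incl; eauto.
Qed.

Theorem mainTheorem13 :
  forall decl : nat -> sty, decl_ok decl ->
  (* (1) Soundness *)
  (forall (U : list nat) (G : ctx) (t : term) (Phi : socp) (rho : mono) (U' : list nat),
      wf_ctx G ->
      (forall al, In al (sov_ctx G) -> In al U) ->
      infer decl U G t Phi rho U' ->
      forall (J : interp) (xi : nat -> idx),
        model J xi Phi ->
        typing decl J (so_subst_ctx xi G) t (so_subst_mono xi rho))
  /\
  (* (2) Completeness *)
  (forall (J : interp) (G : ctx) (t : term) (rho : mono),
      interpretation J ->
      wf_ctx G -> sov_ctx G = [] ->
      wf_mono [] rho -> sov_mono rho = [] ->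
      typing decl J G t rho ->
      exists (tau : mono) (xi : nat -> idx) (Phi : socp) (U' : list nat),
        so_subst_mono xi tau = rho /\
        infer decl [] G t Phi tau U' /\
        model J xi Phi).
Proof.
  intros decl Hd. split.
  - intros U G t Phi rho U' _ _ Hi J xi (HJ & Hp & Hs).
    eapply infer_sound; eauto.
  - intros J G t rho HJ _ HG _ _ Ht.
    assert (Hp : pureS (fun _ => IZero)) by (intros al; simpl; auto).
    destruct (infer_complete decl J Hd G t rho Ht G (fun _ => IZero) [] Hp)
      as (tau & xi & P & U' & Hi & E & _ & (Hs & Hpx & _)).
    + transitivity (so_subst_ctx ISO G).
      * clear. induction G as [|[y s] G IH]; simpl; auto. rewrite <- IH, (proj2 id_ms); auto.
      * apply agree_ctx. rewrite HG; intros a [].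
    + rewrite HG; apply incl_refl.
    + exists tau, xi, P, U'. split; auto. split; auto. split; auto.
Qed.
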